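(* Let $\langle A,\preccurlyeq\rangle$ be a pre-ordered set and let $x\in LO(A,\preccurlyeq)$. The following are equivalent: (i) $x$ is minimal, i.e. there is no $y\in LO(A,\preccurlyeq)$ with $y\subsetneq x$; (ii) for every $a\in x$, $x=pr(a)$; (iii) for every $a\in x$, $x=[a]$.
   Context: A pre-ordering $\preccurlyeq$ on $A$ is a reflexive and transitive binary relation. For $a\in A$, $pr(a)=\{b\in A: b\preccurlyeq a\}$. $LO(A,\preccurlyeq)$ is the set of all nonempty subsets $x\subseteq A$ such that $pr(a)\subseteq x$ for every $a\in x$ (nonempty open sets of the lower topology). Write $a\sim b$ iff $a\preccurlyeq b$ and $b\preccurlyeq a$; this is an equivalence relation and $[a]$ denotes the $\sim$-equivalence class of $a$. *)

(* Defs.v *)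
From Stdlib Require Import RelationClasses.

Definition preorder {A : Type} (le : A -> A -> Prop) : Prop :=
  (forall a, le a a) /\ (forall a b c, le a b -> le b c -> le a c).

Definition subset {A : Type} (x y : A -> Prop) : Prop := forall a, x a -> y a.

Definition set_eq {A : Type} (x y : A -> Prop) : Prop := forall a, x a <-> y a.

Definition proper_subset {A : Type} (y x : A -> Prop) : Prop :=
  subset y x /\ ~ set_eq y x.

Definition pr {A : Type} (le : A -> A -> Prop) (a : A) : A -> Prop :=
  fun b => le b a.

Definition LO {A : Type} (le : A -> A -> Prop) (x : A -> Prop) : Prop :=
  (exists a, x a) /\ (forall a, x a -> subset (pr le a) x).

Definition equiv_class {A : Type} (le : A -> A -> Prop) (a : A) : A -> Prop :=
  fun b => le b a /\ le a b.

(* Main.v *)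
Require Import Defs.
From Stdlib Require Import Classical.

Theorem lemma2p2 (A : Type) (le : A -> A -> Prop) (Hpre : preorder le)
  (x : A -> Prop) (Hx : LO le x) :
  ((~ exists y, LO le y /\ proper_subset y x) <->
     (forall a, x a -> set_eq x (pr le a))) /\
  ((forall a, x a -> set_eq x (pr le a)) <->
     (forall a, x a -> set_eq x (equiv_class le a))).
Proof.
  destruct Hpre as [Hr Ht]. destruct Hx as [[a0 Ha0] Hd].
  unfold set_eq, proper_subset, subset, pr, equiv_class, LO in *.
  split; split.
  - intros Hmin a Ha.
    assert (Hs : forall b, le b a -> x b) by (intros b Hb; exact (Hd a Ha b Hb)).
    apply NNPP. intros Hne. apply Hmin. exists (fun b => le b a).
    split.
    + split. exists a; apply Hr. intros c Hc d Hdc. eauto.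
    + split. exact Hs. intros Heq. apply Hne. intros b. specialize (Heq b). tauto.
  - intros H2 [y [[[b Hb] Hyd] [Hsub Hne]]].
    apply Hne. intros c. split. apply Hsub.
    intros Hc. apply (Hyd b Hb). apply (H2 b (Hsub b Hb)). exact Hc.
  - intros H2 a Ha b. split.
    + intros Hb. split. apply (H2 a Ha). exact Hb. apply (H2 b Hb). exact Ha.
    + intros [H1 _]. apply (H2 a Ha). exact H1.
  - intros H3 a Ha b. split.
    + intros Hb. apply (H3 a Ha). exact Hb.
    + intros Hb. exact (Hd a Ha b Hb).
Qed.
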